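(* Consider the following discrete-time process on three times $r=0<s<t$. The environment at time $r=0$ is in a correlated bipartite state $\eta_{\mathcal{E}_s\mathcal{E}_t}$ (with two parts, one labelled by each later time step), and the system is initially uncorrelated with the environment. Between times $r$ and $s$ the system interacts only with environment part $\mathcal{E}_s$ via the swap unitary $\mathbf{S}_{\mathcal{S}\mathcal{E}_s}$ (where $\mathbf{S}\ket{ij}=\ket{ji}$), and between times $s$ and $t$ the system interacts only with environment part $\mathcal{E}_t$ via the swap unitary $\mathbf{S}_{\mathcal{S}\mathcal{E}_t}$; each environment part is discarded after its interaction. Then the process is operationally CP-divisible, i.e. $\Lambda_{t:r}=\Lambda_{t:s}\circ\Lambda_{s:r}$, where each $\Lambda_{y:x}$ is the experimentally reconstructed map obtained by preparing a fresh system state at $x$ (after discarding the system there) and measuring at $y$. Nonetheless the process is non-Markovian: if the experimenter stores the system state at time $s_{-}$, inserts a fresh (independent) system state at $s_{+}$, lets the dynamics continue to $t$ and stores that output too, the resulting joint state $\rho_{st}$ is exactly the correlated initial environment state $\eta_{\mathcal{E}_s\mathcal{E}_t}$, so it is correlated even though the states inserted at times $r$ and $s_{+}$ were independent.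
   Context: Setting: a finite-dimensional quantum system coupled to an environment, with system–environment unitary dynamics between times. Operational CP (oCP) divisibility: for any $t>s>r$, $\Lambda_{t:r}=\Lambda_{t:s}\circ\Lambda_{s:r}$, where $\Lambda_{t:s}[\rho_s]=\operatorname{tr}_\mathcal{E}[\mathcal{U}_{t:s}(\rho_s\otimes\eta_s)]$ is reconstructed by discarding the system at $s_{-}$, preparing a fresh state $\rho_s$ at $s_{+}$, and measuring at $t$; $\eta_s$ is the reduced environment state at $s$. A process is Markovian iff its process tensor has product form $T=L_{t:s}\otimes L_{s:r}$ (Choi states of the intermediate maps); any correlation between outputs produced from independent inputs signals memory. *)

(* Defs.v *)
(* Finite-dimensional quantum operators as matrices indexed
   by a finite basis type, over an arbitrary numClosedFieldType C (e.g. algC,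
   the complex algebraic numbers; the statement holds for all of them). *)
From HB Require Import structures.
From mathcomp Require Import all_boot all_order all_algebra.
Set Implicit Arguments. Unset Strict Implicit. Unset Printing Implicit Defensive.
Import Order.TTheory GRing.Theory Num.Theory.
Local Open Scope ring_scope.

Section Quantum.
Variable C : numClosedFieldType.

Definition op (T : finType) := T -> T -> C.

Definition mulo (T : finType) (A B : op T) : op T :=
  fun i j => \sum_(k : T) A i k * B k j.
Definition adjo (T : finType) (A : op T) : op T := fun i j => (A j i)^*.
Definition conjU (T : finType) (U rho : op T) : op T := mulo (mulo U rho) (adjo U).
Definition traceo (T : finType) (A : op T) : C := \sum_(i : T) A i i.
Definition tens (I J : finType) (A : op I) (B : op J) : op (I * J)%type :=
  fun x y => A x.1 y.1 * B x.2 y.2.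
Definition ptr2 (I J : finType) (A : op (I * J)%type) : op I :=
  fun i k => \sum_(j : J) A (i, j) (k, j).
Definition ptr1 (I J : finType) (A : op (I * J)%type) : op J :=
  fun j l => \sum_(i : I) A (i, j) (i, l).

Definition is_state (T : finType) (rho : op T) : Prop :=
  (forall v : T -> C, 0 <= \sum_(i : T) \sum_(j : T) (v i)^* * rho i j * v j)
  /\ traceo rho = 1.

Definition correlated (I J : finType) (rho : op (I * J)%type) : Prop :=
  ~ exists (A : op I) (B : op J), rho = tens A B.

Definition perm_op (T : finType) (f : T -> T) : op T :=
  fun i j => if i == f j then 1 else 0.

(* ---- The swap process.  System S and environment parts E_s, E_t all have
   basis I (the swap needs equal dimensions).  Global ordering S (E_s E_t). *)
Variable I : finType.
Variable eta : op (I * I)%type.   (* initial environment state on E_s (x) E_t *)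

Definition swapSEs_fun (x : (I * (I * I))%type) : (I * (I * I))%type := (x.2.1, (x.1, x.2.2)).
Definition U_sr : op (I * (I * I))%type := perm_op swapSEs_fun.
(* S|ij> = |ji> on S E_t (E_s already discarded) *)
Definition swapSEt_fun (x : (I * I)%type) : (I * I)%type := (x.2, x.1).
Definition U_ts : op (I * I)%type := perm_op swapSEt_fun.

(* joint S E_s E_t state at s_- given system state rho at r *)
Definition sigma_s (rho : op I) : op (I * (I * I))%type := conjU U_sr (tens rho eta).
Definition tau_s (rho : op I) : op (I * I)%type :=
  fun x y => \sum_(b : I) sigma_s rho (x.1, (b, x.2)) (y.1, (b, y.2)).
Definition eta_s (rho : op I) : op I := ptr1 (tau_s rho).

Definition Lambda_sr (rho : op I) : op I := ptr2 (sigma_s rho).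
Definition Lambda_tr (rho : op I) : op I := ptr2 (conjU U_ts (tau_s rho)).
(* rho0 : system state prepared at r in the run that determines eta_s *)
Definition Lambda_ts (rho0 : op I) (rho : op I) : op I :=
  ptr2 (conjU U_ts (tens rho (eta_s rho0))).

(* Store the system at s_- in an ancilla A, insert fresh rho' at s_+.
   Ordering S (A E_t); the swap acts on S and E_t. *)
Definition swapSEt3_fun (x : (I * (I * I))%type) : (I * (I * I))%type := (x.2.2, (x.2.1, x.1)).
Definition U_ts_anc : op (I * (I * I))%type := perm_op swapSEt3_fun.
(* joint output state rho_st on (stored s-output) (x) (t-output) *)
Definition rho_st (rho rho' : op I) : op (I * I)%type :=
  let W := conjU U_ts_anc (tens rho' (tau_s rho)) in
  fun x y => \sum_(c : I) W (x.2, (x.1, c)) (y.2, (y.1, c)).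

End Quantum.

(* Main.v *)
Require Import Defs.
From mathcomp Require Import all_boot all_order all_algebra.
From Stdlib Require Import FunctionalExtensionality.
Set Implicit Arguments. Unset Strict Implicit. Unset Printing Implicit Defensive.
Import Order.TTheory GRing.Theory Num.Theory.
Local Open Scope ring_scope.

Lemma conjU_perm (C : numClosedFieldType) (T : finType) (f : T -> T) (A : op C T) :
  involutive f -> forall x y, conjU (perm_op C f) A x y = A (f x) (f y).
Proof.
move=> fK0 x y; have fK : forall z, f (f z) = z := fK0; rewrite /conjU /mulo /adjo /perm_op.
have L : forall (B : op C T) i l, \sum_k (if i == f k then 1 else 0) * B k l = B (f i) l.
  move=> B i l; rewrite (bigD1 (f i)) //= fK eqxx mul1r big1 ?addr0 //.
  move=> k /negPf nk; case: eqP => [e|_]; last by rewrite mul0r.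
  by move: nk; rewrite e fK eqxx.
under eq_bigr => l _ do rewrite L.
rewrite (bigD1 (f y)) //= fK eqxx rmorph1 mulr1 big1 ?addr0 //.
move=> k /negPf nk; case: eqP => [e|_]; last by rewrite rmorph0 mulr0.
by move: nk; rewrite e fK eqxx.
Qed.


Lemma tau_sE' (C : numClosedFieldType) (I : finType) (eta : op C (I * I)%type) (rho : op C I) x y :
  tau_s eta rho x y = traceo rho * eta x y.
Proof.
rewrite /tau_s /sigma_s /traceo mulr_suml; apply: eq_bigr => b _.
rewrite conjU_perm; last by case=> [a [c d]].
by case: x => a c; case: y => a' c'; rewrite /tens.
Qed.

Lemma rho_stE (C : numClosedFieldType) (I : finType) (eta : op C (I * I)%type) (rho rho' : op C I) x y :
  rho_st eta rho rho' x y = traceo rho' * (traceo rho * eta x y).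
Proof.
rewrite /rho_st /traceo mulr_suml; apply: eq_bigr => c _.
rewrite conjU_perm; last by case=> [a [b d]].
by rewrite /tens /= tau_sE'; case: x => a b; case: y => a' b'.
Qed.

Section L.
Variables (C : numClosedFieldType) (I : finType) (eta : op C (I * I)%type).
Lemma Lambda_srE rho i k : Lambda_sr eta rho i k = traceo rho * ptr2 eta i k.
Proof.
rewrite /Lambda_sr /ptr2 /traceo.
transitivity (\sum_(j : I * I) rho j.1 j.1 * eta (i, j.2) (k, j.2)).
  apply: eq_bigr => -[a c] _; rewrite /sigma_s conjU_perm //; by case=> [u [v w]].
by rewrite big_distrlr /= pair_bigA.
Qed.
Lemma Lambda_trE rho i k : Lambda_tr eta rho i k = traceo rho * ptr1 eta i k.
Proof.
rewrite /Lambda_tr /ptr2 /ptr1 mulr_sumr; apply: eq_bigr => j _.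
by rewrite conjU_perm ?tau_sE' //; case.
Qed.
Lemma Lambda_tsE rho0 rho i k : Lambda_ts eta rho0 rho i k = traceo rho * (traceo rho0 * ptr1 eta i k).
Proof.
rewrite /Lambda_ts /ptr2 /traceo mulr_suml; apply: eq_bigr => j _.
rewrite conjU_perm /tens /=; last by case.
congr (_ * _); rewrite /eta_s /ptr1 mulr_sumr; apply: eq_bigr => a _.
by rewrite tau_sE'.
Qed.
Lemma tr_ptr2 : traceo (ptr2 eta) = traceo eta.
Proof. rewrite /traceo /ptr2 pair_bigA /=; apply: eq_bigr => -[a b] _ //. Qed.
End L.

Theorem mainTheorem2 (C : numClosedFieldType) (I : finType) (eta : op C (I * I)%type) :
  is_state eta -> correlated eta ->
  (* operational CP divisibility *)
  (forall rho0 : op C I, is_state rho0 ->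
     Lambda_tr eta = (Lambda_ts eta rho0) \o (Lambda_sr eta)) /\
  (* non-Markovianity: independent inputs give the correlated output eta *)
  (forall rho rho' : op C I, is_state rho -> is_state rho' ->
     rho_st eta rho rho' = eta /\ correlated (rho_st eta rho rho')).
Proof.
move=> [_ treta] corr.
have rhoE : forall rho rho' : op C I, is_state rho -> is_state rho' ->
    rho_st eta rho rho' = eta.
  move=> rho rho' [_ tr] [_ tr']; apply: functional_extensionality => x.
  apply: functional_extensionality => y.
  by rewrite rho_stE tr tr' !mul1r.
split; last by move=> rho rho' s s'; rewrite rhoE.
move=> rho0 [_ tr0]; apply: functional_extensionality => rho.
apply: functional_extensionality => i; apply: functional_extensionality => k.
have trL : traceo (Lambda_sr eta rho) = traceo rho.
  rewrite /traceo; under eq_bigr => j _ do rewrite Lambda_srE.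
  by rewrite -mulr_sumr -/(traceo (ptr2 eta)) tr_ptr2 treta mulr1.
by rewrite /= Lambda_trE Lambda_tsE trL tr0 mul1r.
Qed.
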